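(* Let $S=(X,\prec,\sqsubset)$ be a finite so-structure. Then: (1) for all $\alpha,\beta\in X$: $\alpha\in[\beta]$ if and only if for every $\lhd\in ext(S)$, either $\alpha=\beta$ or $\alpha\frown_\lhd\beta$; (2) there exists $\lhd\in ext(S)$ such that $\Omega_\lhd=[\gamma_1]\dots[\gamma_k]$ for some $\gamma_1,\dots,\gamma_k\in X$, i.e. every step of $\Omega_\lhd$ is a $\equiv_\sqsubset$-equivalence class; (3) if $[\alpha]\,(\hat\sqsubset)^{\mathrm{cov}}\,[\beta]$, then there exists $\lhd\in ext(S)$ with $\Omega_\lhd=[\delta_1]\dots[\delta_m]$ for some $\delta_1,\dots,\delta_m\in X$, and some $1\le i<m$ with $\alpha\in[\delta_i]$ and $\beta\in[\delta_{i+1}]$.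
   Context: A stratified order structure (so-structure) is a triple $S=(X,\prec,\sqsubset)$ with $\prec,\sqsubset\subseteq X\times X$ such that for all $\alpha,\beta,\gamma\in X$: (S1) $\neg(\alpha\sqsubset\alpha)$; (S2) $\alpha\prec\beta\Rightarrow\alpha\sqsubset\beta$; (S3) $\alpha\sqsubset\beta\sqsubset\gamma\wedge\alpha\neq\gamma\Rightarrow\alpha\sqsubset\gamma$; (S4) $(\alpha\sqsubset\beta\wedge\beta\prec\gamma)\vee(\alpha\prec\beta\wedge\beta\sqsubset\gamma)\Rightarrow\alpha\prec\gamma$. For a relation $\lhd$ on $X$: $\alpha\frown_\lhd\beta$ iff $\alpha\neq\beta$, $\neg(\alpha\lhd\beta)$ and $\neg(\beta\lhd\alpha)$; $\lhd^\frown:=\lhd\cup\frown_\lhd$. A partial order $\lhd$ is stratified if $\frown_\lhd\cup\mathrm{id}_X$ is an equivalence relation. For a stratified order $\lhd$ on a finite set $X$, $\Omega_\lhd=B_1\dots B_k$ denotes the unique sequence of nonempty pairwise disjoint sets with union $X$ such that $\lhd=\bigcup_{i<j}B_i\times B_j$. A stratified extension of $S$ is a stratified order $\lhd$ on $X$ with $\prec\subseteq\lhd$ and $\sqsubset\subseteq\lhd^\frown$; $ext(S)$ is the set of all stratified extensions of $S$. Define $\alpha\equiv_\sqsubset\beta$ iff $\alpha=\beta$ or ($\alpha\sqsubset\beta$ and $\beta\sqsubset\alpha$); $[\alpha]$ is the equivalence class of $\alpha$. On the classes, $[\alpha]\,\hat\sqsubset\,[\beta]$ iff $[\alpha]\neq[\beta]$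 and $([\alpha]\times[\beta])\cap\sqsubset\neq\emptyset$. For a relation $R$, its covering relation is $R^{\mathrm{cov}}:=\{(x,y): xRy\wedge\neg\exists z\,(xRz\wedge zRy)\}$. *)

(* Defs.v *)
From mathcomp Require Import all_boot.
Set Implicit Arguments. Unset Strict Implicit. Unset Printing Implicit Defensive.

Section SO.
Variable X : finType.

Definition so_structure (prec sq : rel X) : Prop :=
  [/\ (forall a, ~~ sq a a),
      (forall a b, prec a b -> sq a b),
      (forall a b c, sq a b -> sq b c -> a != c -> sq a c) &
      (forall a b c, (sq a b && prec b c) || (prec a b && sq b c) -> prec a c)].

Definition frown (R : rel X) (a b : X) : bool :=
  [&& a != b, ~~ R a b & ~~ R b a].

Definition rel_frown (R : rel X) : rel X := fun a b => R a b || frown R a b.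

Definition partial_order (R : rel X) : Prop :=
  (forall a, ~~ R a a) /\ (forall a b c, R a b -> R b c -> R a c).

Definition stratified_order (R : rel X) : Prop :=
  partial_order R /\
  let E := fun a b => (a == b) || frown R a b in
  [/\ (forall a, E a a), (forall a b, E a b -> E b a) &
      (forall a b c, E a b -> E b c -> E a c)].

Definition ext (prec sq : rel X) (R : rel X) : Prop :=
  [/\ stratified_order R,
      (forall a b, prec a b -> R a b) &
      (forall a b, sq a b -> rel_frown R a b)].

(* Omega_R = s : s is a sequence of nonempty pairwise disjoint sets with
   union X such that R = \bigcup_{i<j} B_i x B_j.  (Omega_R is the unique
   such sequence, so "Omega_R = s" is expressed by this predicate.) *)
Definition is_Omega (R : rel X) (s : seq {set X}) : Prop :=
  [/\ (forall i, i < size s -> nth set0 s i != set0),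
      (forall i j, i < size s -> j < size s -> i != j ->
         [disjoint nth set0 s i & nth set0 s j]),
      (forall x : X, exists2 i, i < size s & x \in nth set0 s i) &
      (forall a b, R a b <->
         exists i j, [/\ i < j, j < size s, a \in nth set0 s i & b \in nth set0 s j])].

Definition sq_eqv (sq : rel X) (a b : X) : bool :=
  (a == b) || (sq a b && sq b a).

Definition cls (sq : rel X) (a : X) : {set X} := [set b | sq_eqv sq b a].

Definition hat_sq (sq : rel X) (A B : {set X}) : Prop :=
  [/\ exists a, A = cls sq a, exists b, B = cls sq b, A != B &
      exists a b, [/\ a \in A, b \in B & sq a b]].

End SO.

Definition cov (T : Type) (R : T -> T -> Prop) (x y : T) : Prop :=
  R x y /\ ~ (exists z, R x z /\ R z y).

(* Main.v *)
Require Import Defs.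
From mathcomp Require Import all_boot.
Set Implicit Arguments. Unset Strict Implicit. Unset Printing Implicit Defensive.

Lemma max_exists (X : finType) (L : rel X)
  (Lirr : forall x, ~~ L x x) (Ltr : forall x y z, L x y -> L y z -> L x z)
  (A : {set X}) m0 : m0 \in A ->
  exists2 m, m \in A & forall y, y \in A -> ~~ L m y.
Proof.
move=> Hm0.
case: (arg_minnP (fun x => #|[set y in A | L x y]|) Hm0) => m HmA Hmin.
exists m => // y HyA; apply/negP => Hmy.
have := Hmin y HyA; rewrite leqNgt => /negP; apply; apply: proper_card.
apply/properP; split.
  apply/subsetP => z; rewrite !inE => /andP[-> Hyz] /=; exact: Ltr Hmy Hyz.
by exists y; rewrite !inE ?HyA ?Hmy ?Lirr.
Qed.

Lemma rank_exists (X : finType) (E L : rel X)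
  (Erefl : forall x, E x x) (Esym : forall x y, E x y -> E y x)
  (Etr : forall x y z, E x y -> E y z -> E x z)
  (Lirr : forall x, ~~ L x x) (Ltr : forall x y z, L x y -> L y z -> L x z)
  (Lcl : forall x y z, E x y -> L y z -> L x z)
  (A : {set X}) :
  exists f : X -> nat, exists k,
  [/\ forall x, x \in A -> f x < k,
      forall i, i < k -> exists2 x, x \in A & f x = i,
      forall x y, x \in A -> y \in A -> (f x == f y) = E x y &
      forall x y, x \in A -> y \in A -> L x y -> f x < f y].
Proof.
move: {2}#|A| (leqnn #|A|) => n; elim: n A => [|n IH] A HA.
  exists (fun _ => 0), 0; move: HA; rewrite leqn0 => /eqP/cards0_eq ->.
  by split=> // [x|x y|x y]; rewrite ?inE.
case: (set_0Vmem A) => [->|[m0 Hm0]].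
  by exists (fun _ => 0), 0; split=> // [x|x y|x y]; rewrite ?inE.
have [m HmA Hmax] := max_exists Lirr Ltr Hm0.
set A' := A :\: [set y | E y m].
have HA' : #|A'| <= n.
  rewrite -ltnS; apply: leq_trans HA; apply: proper_card; apply/properP; split.
    exact: subsetDl.
  by exists m; rewrite // !inE Erefl.
have [f [k [Hk Hs Hi Hm]]] := IH A' HA'.
have inA' : forall x, x \in A -> ~~ E x m -> x \in A'.
  by move=> x Hx Hxm; rewrite !inE Hx Hxm.
exists (fun x => if E x m then k else f x), k.+1; split.
- move=> x Hx; case: ifP => Hxm //; exact: ltnW (Hk _ (inA' _ Hx (negbT Hxm))).
- move=> i; rewrite ltnS leq_eqVlt => /orP[/eqP ->|Hik].
    by exists m; rewrite ?Erefl.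
  have [x Hx <-] := Hs i Hik; move: Hx; rewrite !inE => /andP[Hxm Hx].
  by exists x; rewrite // (negbTE Hxm).
- move=> x y Hx Hy; case: ifP => Hxm; case: ifP => Hym.
  + by rewrite eqxx; symmetry; apply: Etr Hxm (Esym _ _ Hym).
  + have := Hk _ (inA' _ Hy (negbT Hym)); rewrite ltn_neqAle eq_sym => /andP[/negbTE -> _].
    by apply/esym/negP => Hxy; move/negP: Hym; apply; apply: Etr (Esym _ _ Hxy) Hxm.
  + have := Hk _ (inA' _ Hx (negbT Hxm)); rewrite ltn_neqAle => /andP[/negbTE -> _].
    by apply/esym/negP => Hxy; move/negP: Hxm; apply; apply: Etr Hxy Hym.
  + exact: Hi (inA' _ Hx (negbT Hxm)) (inA' _ Hy (negbT Hym)).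
- move=> x y Hx Hy Hxy; case: ifP => Hxm.
    by have := Hmax y Hy; rewrite (Lcl _ _ _ (Esym _ _ Hxm) Hxy).
  case: ifP => Hym; first exact: Hk (inA' _ Hx (negbT Hxm)).
  exact: Hm (inA' _ Hx (negbT Hxm)) (inA' _ Hy (negbT Hym)) Hxy.
Qed.

Set Implicit Arguments. Unset Strict Implicit. Unset Printing Implicit Defensive.

Definition Lr (X : finType) (sq : rel X) : rel X := fun a b => sq a b && ~~ sq b a.

Lemma E_refl (X : finType) (sq : rel X) x : sq_eqv sq x x.
Proof. by rewrite /sq_eqv eqxx. Qed.

Lemma E_sym (X : finType) (sq : rel X) x y : sq_eqv sq x y -> sq_eqv sq y x.
Proof. by rewrite /sq_eqv eq_sym andbC. Qed.

Lemma sq_neq (X : finType) (prec sq : rel X) : so_structure prec sq ->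
  forall a b, sq a b -> a != b.
Proof. by case=> H1 _ _ _ a b Hab; apply/eqP => E; move: Hab; rewrite E (negbTE (H1 b)). Qed.

Lemma E_tr (X : finType) (prec sq : rel X) : so_structure prec sq ->
  forall x y z, sq_eqv sq x y -> sq_eqv sq y z -> sq_eqv sq x z.
Proof.
move=> Hso; have [H1 H2 H3 H4] := Hso.
move=> x y z; rewrite /sq_eqv => /orP[/eqP->//|/andP[Hxy Hyx]].
case/orP=> [/eqP<-|/andP[Hyz Hzy]]; first by rewrite Hxy Hyx orbT.
case: (eqVneq x z) => [//|Hxz] /=.
by rewrite (H3 _ _ _ Hxy Hyz Hxz) (H3 _ _ _ Hzy Hyx) // eq_sym.
Qed.

Lemma L_irr (X : finType) (sq : rel X) x : ~~ Lr sq x x.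
Proof. by rewrite /Lr; case: (sq x x). Qed.

Lemma L_tr (X : finType) (prec sq : rel X) : so_structure prec sq ->
  forall x y z, Lr sq x y -> Lr sq y z -> Lr sq x z.
Proof.
move=> Hso; have [H1 H2 H3 H4] := Hso.
move=> x y z /andP[Hxy Hyx] /andP[Hyz Hzy].
case: (eqVneq x z) => [Exz|Hxz]; first by move: Hyx; rewrite Exz Hyz.
rewrite /Lr (H3 _ _ _ Hxy Hyz Hxz) /=; apply/negP => Hzx.
by move/negP: Hyx; apply; apply: (H3 _ _ _ Hyz Hzx); rewrite eq_sym (sq_neq Hso Hxy).
Qed.

Lemma L_cl (X : finType) (prec sq : rel X) : so_structure prec sq ->
  forall x y z, sq_eqv sq x y -> Lr sq y z -> Lr sq x z.
Proof.
move=> Hso; have [H1 H2 H3 H4] := Hso.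
move=> x y z /orP[/eqP->//|/andP[Hxy Hyx]] /andP[Hyz Hzy].
case: (eqVneq x z) => [Exz|Hxz]; first by move: Hzy; rewrite -Exz Hxy.
rewrite /Lr (H3 _ _ _ Hxy Hyz Hxz) /=; apply/negP => Hzx.
by move/negP: Hzy; apply; apply: H3 Hzx Hxy _; rewrite eq_sym (sq_neq Hso Hyz).
Qed.

Lemma L_prec (X : finType) (prec sq : rel X) : so_structure prec sq ->
  forall a b, prec a b -> Lr sq a b.
Proof.
move=> Hso; have [H1 H2 H3 H4] := Hso.
move=> a b Hab; rewrite /Lr H2 //=; apply/negP => Hba.
by have := H4 a b a; rewrite Hab Hba orbT => /(_ isT) /H2; rewrite (negbTE (H1 a)).
Qed.

Lemma seq_of_rank (X : finType) (f : X -> nat) k :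
  (forall i, i < k -> exists x, f x = i) ->
  exists gs : seq X, size gs = k /\ forall d i, i < k -> f (nth d gs i) = i.
Proof.
elim: k => [|k IH] Hs; first by exists [::].
have [gs [Hsz Hn]] := IH (fun i Hi => Hs i (ltnW Hi)).
have [x Hx] := Hs k (ltnSn k).
exists (rcons gs x); rewrite size_rcons Hsz; split=> // d i Hi.
rewrite nth_rcons Hsz; case: ltnP => Hik; first exact: Hn.
have Eik : i = k by apply/eqP; rewrite eqn_leq Hik andbT -ltnS.
by rewrite Eik eqxx.
Qed.

Lemma from_rank (X : finType) (prec sq : rel X) (f : X -> nat) k :
  so_structure prec sq ->
  (forall x, f x < k) ->
  (forall i, i < k -> exists x, f x = i) ->
  (forall x y, (f x == f y) = sq_eqv sq x y) ->
  (forall x y, Lr sq x y -> f x < f y) ->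
  ext prec sq (fun a b => f a < f b) /\
  exists gs : seq X, [/\ size gs = k,
    (forall d i x, i < k -> (x \in cls sq (nth d gs i)) = (f x == i)) &
    is_Omega (fun a b => f a < f b) (map (cls sq) gs)].
Proof.
move=> Hso Hk Hs Hi Hm; have [H1 H2 H3 H4] := Hso.
have Hfr : forall a b, ((a == b) || frown (fun a b => f a < f b) a b) = (f a == f b).
  move=> a b; case: (eqVneq a b) => [->|Hab] /=; first by rewrite eqxx.
  by rewrite /frown Hab -!leqNgt /= eqn_leq andbC.
split.
  split.
  - split; first by split=> [a|a b c]; [rewrite ltnn | exact: ltn_trans].
    rewrite /=.
    split => [a|a b|a b c]; rewrite !Hfr //; first by rewrite eq_sym.
    by move=> /eqP-> /eqP->.
  - by move=> a b /(L_prec Hso) /Hm.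
  - move=> a b Hab; rewrite /rel_frown.
    case Hba: (sq b a).
      apply/orP; right; move: (Hfr a b); rewrite Hi /sq_eqv Hab Hba orbT.
      by rewrite (negbTE (sq_neq Hso Hab)).
    by rewrite Hm // /Lr Hab Hba.
have [gs [Hsz Hn]] := seq_of_rank Hs.
have Hc : forall d i x, i < k -> (x \in cls sq (nth d gs i)) = (f x == i).
  by move=> d i x Hik; rewrite /cls inE -Hi Hn.
exists gs; split=> //; rewrite /is_Omega size_map Hsz.
split.
- move=> i Hik; have [x Hx] := Hs i Hik; rewrite (nth_map x) ?Hsz //.
  by apply/set0Pn; exists x; rewrite Hc // Hx.
- move=> i j Hik Hjk Hij; have [x _] := Hs i Hik; rewrite !(nth_map x) ?Hsz //.
  apply/pred0P => y /=; rewrite !Hc //; apply/negP => /andP[/eqP Hi1 /eqP Hj1].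
  by rewrite -Hi1 -Hj1 eqxx in Hij.
- move=> x; exists (f x) => //; rewrite (nth_map x) ?Hsz // Hc //.
- move=> a b; split.
    move=> Hab; exists (f a), (f b); rewrite !(nth_map a) ?Hsz // !Hc //.
  case=> i [j [Hij Hjk]]; have Hik := ltn_trans Hij Hjk.
  have [x _] := Hs i Hik; rewrite !(nth_map x) ?Hsz // !Hc //.
  by move=> /eqP-> /eqP->.
Qed.

Lemma L_cr (X : finType) (prec sq : rel X) : so_structure prec sq ->
  forall x y z, Lr sq x y -> sq_eqv sq y z -> Lr sq x z.
Proof.
move=> Hso; have [H1 H2 H3 H4] := Hso.
move=> x y z /andP[Hxy Hyx] /orP[/eqP<-|/andP[Hyz Hzy]]; first by rewrite /Lr Hxy Hyx.
case: (eqVneq x z) => [Exz|Hxz]; first by move: Hyx; rewrite Exz Hyz.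
rewrite /Lr (H3 _ _ _ Hxy Hyz Hxz) /=; apply/negP => Hzx.
by move/negP: Hyx; apply; apply: (H3 _ _ _ Hyz Hzx); rewrite eq_sym (sq_neq Hso Hxy).
Qed.

Lemma LE_contra (X : finType) (prec sq : rel X) : so_structure prec sq ->
  forall x y, sq_eqv sq x y -> Lr sq x y -> False.
Proof.
move=> Hso x y Exy Lxy.
by have := L_irr sq y; rewrite (L_cl Hso (E_sym Exy) Lxy).
Qed.

Lemma in_cls (X : finType) (sq : rel X) x y : (x \in cls sq y) = sq_eqv sq x y.
Proof. by rewrite /cls inE. Qed.

Lemma hat_of_L (X : finType) (prec sq : rel X) : so_structure prec sq ->
  forall x y, Lr sq x y -> hat_sq sq (cls sq x) (cls sq y).
Proof.
move=> Hso x y Lxy; split; [by exists x | by exists y | | ].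
  apply/negP => /eqP Heq; have : x \in cls sq y by rewrite -Heq in_cls E_refl.
  rewrite in_cls => Exy; exact: (LE_contra Hso Exy Lxy).
exists x, y; rewrite !in_cls !E_refl; split=> //; by case/andP: Lxy.
Qed.

Theorem mainTheorem2 (X : finType) (prec sq : rel X) :
  so_structure prec sq ->
  (* (1) *)
  (forall a b : X,
     a \in cls sq b <->
     (forall R : rel X, ext prec sq R -> a = b \/ frown R a b)) /\
  (* (2) *)
  (exists R : rel X, ext prec sq R /\
     exists gs : seq X, is_Omega R (map (cls sq) gs)) /\
  (* (3) *)
  (forall a b : X,
     cov (hat_sq sq) (cls sq a) (cls sq b) ->
     exists R : rel X, ext prec sq R /\
       exists ds : seq X, is_Omega R (map (cls sq) ds) /\
         exists i, i.+1 < size ds /\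
           a \in cls sq (nth a ds i) /\ b \in cls sq (nth a ds i.+1)).
Proof.
move=> Hso.
have [f [k [Hk Hs Hi Hm]]] := rank_exists (@E_refl _ sq) (@E_sym _ sq) (E_tr Hso)
  (@L_irr _ sq) (L_tr Hso) (L_cl Hso) setT.
have [Hext [gs [Hsz Hc HO]]] := from_rank Hso (fun x => Hk x (in_setT x))
  (fun i Hik => let: ex_intro2 x _ Hx := Hs i Hik in ex_intro _ x Hx)
  (fun x y => Hi x y (in_setT x) (in_setT y))
  (fun x y => Hm x y (in_setT x) (in_setT y)).
split; [|split].
- move=> a b; split.
    rewrite in_cls => Eab R [[[Rirr Rtr] _] _ Hsq].
    case: (eqVneq a b) => [->|Hab]; first by left.
    right; move: Eab; rewrite /sq_eqv (negbTE Hab) /= => /andP[Sab Sba].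
    move: (Hsq a b Sab) (Hsq b a Sba); rewrite /rel_frown /frown Hab eq_sym Hab /=.
    case Rab: (R a b); case Rba: (R b a) => //=; rewrite ?andbF ?orbF //.
    by have := Rirr a; rewrite (Rtr _ _ _ Rab Rba).
  move=> H; rewrite in_cls; apply/negPn/negP => Hn.
  case: (H _ Hext) => [Eab|]; first by rewrite Eab E_refl in Hn.
  rewrite /frown /= => /and3P[_ H1 H2].
  move: (Hi a b (in_setT a) (in_setT b)); rewrite (negbTE Hn) => /negbT.
  by rewrite neq_ltn (negbTE H1) (negbTE H2).
- by exists (fun a b => f a < f b); split=> //; exists gs.
move=> a b [Hhat Hcov].
have Lab : Lr sq a b.
  case: Hhat => _ _ Hne [a' [b' [Ha' Hb' Sab]]].
  rewrite in_cls in Ha'; rewrite in_cls in Hb'.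
  have Lab' : Lr sq a' b'.
    rewrite /Lr Sab /=; apply/negP => Sba.
    move/negP: Hne; apply; apply/eqP/setP => z; rewrite !in_cls.
    have Eab : sq_eqv sq a b.
      apply: (E_tr Hso (E_sym Ha')); apply: (E_tr Hso _ Hb').
      by rewrite /sq_eqv Sab Sba orbT.
    apply/idP/idP => Hz; first exact: (E_tr Hso Hz Eab).
    exact: (E_tr Hso Hz (E_sym Eab)).
  exact: (L_cr Hso (L_cl Hso (E_sym Ha') Lab') Hb').
have Hnot : forall c, Lr sq a c -> Lr sq c b -> False.
  move=> c Lac Lcb; apply: Hcov; exists (cls sq c).
  by split; [exact: (hat_of_L Hso Lac) | exact: (hat_of_L Hso Lcb)].
pose p x := if sq_eqv sq x a then 1 else if sq_eqv sq x b then 2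
            else if Lr sq x b then 0 else 3.
have P1 : forall x y, sq_eqv sq x y -> p x = p y.
  move=> x y Exy; rewrite /p.
  have e : forall z, sq_eqv sq x z = sq_eqv sq y z.
    move=> z; apply/idP/idP => H; first exact: (E_tr Hso (E_sym Exy) H).
    exact: (E_tr Hso Exy H).
  have l : Lr sq x b = Lr sq y b.
    apply/idP/idP => H; first exact: (L_cl Hso (E_sym Exy) H).
    exact: (L_cl Hso Exy H).
  by rewrite !e l.
have P2 : forall x y, Lr sq x y -> p x <= p y.
  move=> x y Lxy; rewrite /p.
  case Eya: (sq_eqv sq y a).
    case Exa: (sq_eqv sq x a).
      by exfalso; apply: (LE_contra Hso (E_tr Hso Exa (E_sym Eya)) Lxy).
    case Exb: (sq_eqv sq x b).
      exfalso; have Lba := L_cl Hso (E_sym Exb) (L_cr Hso Lxy Eya).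
      by have := L_irr sq a; rewrite (L_tr Hso Lab Lba).
    by rewrite (L_tr Hso (L_cr Hso Lxy Eya) Lab).
  case Eyb: (sq_eqv sq y b).
    case: ifP => // Exa; case Exb: (sq_eqv sq x b).
      by exfalso; apply: (LE_contra Hso (E_tr Hso Exb (E_sym Eyb)) Lxy).
    by rewrite (L_cr Hso Lxy Eyb).
  case Lyb: (Lr sq y b); last by case: ifP => //; case: ifP => //; case: ifP.
  case Exa: (sq_eqv sq x a).
    by exfalso; apply: (Hnot y (L_cl Hso (E_sym Exa) Lxy) Lyb).
  case Exb: (sq_eqv sq x b).
    by exfalso; apply: (LE_contra Hso Exb (L_tr Hso Lxy Lyb)).
  by rewrite (L_tr Hso Lxy Lyb).
pose L' x y := Lr sq x y || (p x < p y).
have L'irr : forall x, ~~ L' x x by move=> x; rewrite /L' negb_or L_irr ltnn.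
have L'tr : forall x y z, L' x y -> L' y z -> L' x z.
  move=> x y z /orP[Lxy|Pxy] /orP[Lyz|Pyz]; rewrite /L'.
  - by rewrite (L_tr Hso Lxy Lyz).
  - by rewrite (leq_ltn_trans (P2 _ _ Lxy) Pyz) orbT.
  - by rewrite (leq_trans Pxy (P2 _ _ Lyz)) orbT.
  - by rewrite (ltn_trans Pxy Pyz) orbT.
have L'cl : forall x y z, sq_eqv sq x y -> L' y z -> L' x z.
  move=> x y z Exy /orP[Lyz|Pyz]; rewrite /L'.
    by rewrite (L_cl Hso Exy Lyz).
  by rewrite (P1 _ _ Exy) Pyz orbT.
have [F [K [HK HS HI HM]]] := rank_exists (@E_refl _ sq) (@E_sym _ sq) (E_tr Hso)
  L'irr L'tr L'cl setT.
have HI' : forall x y, (F x == F y) = sq_eqv sq x y.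
  by move=> x y; apply: HI; apply: in_setT.
have HM' : forall x y, L' x y -> F x < F y.
  by move=> x y; apply: HM; apply: in_setT.
have [Hext2 [ds [Hsz2 Hc2 HO2]]] := from_rank Hso (fun x => HK x (in_setT x))
  (fun i Hik => let: ex_intro2 x _ Hx := HS i Hik in ex_intro _ x Hx)
  HI' (fun x y Lxy => HM' x y (introT orP (or_introl Lxy))).
have Fab : F a < F b by apply: HM'; rewrite /L' Lab.
have FbK : F b < K := HK b (in_setT b).
have Fb : F b = (F a).+1.
  apply/eqP; rewrite eqn_leq Fab andbT leqNgt; apply/negP => Hlt.
  have [y _ Hy] := HS (F a).+1 (ltn_trans Hlt FbK).
  have pa : p a = 1 by rewrite /p E_refl.
  have pb : p b = 2.
    rewrite /p E_refl; case: ifP => // Eba.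
    by exfalso; apply: (LE_contra Hso (E_sym Eba) Lab).
  have Eya : sq_eqv sq y a = false by rewrite -HI' Hy (gtn_eqF (ltnSn _)).
  have Eyb : sq_eqv sq y b = false by rewrite -HI' Hy (ltn_eqF Hlt).
  case Lyb: (Lr sq y b).
    have : F y < F a by apply: HM'; rewrite /L' pa /p Eya Eyb Lyb orbT.
    by rewrite Hy ltnNge leqnSn.
  have : F b < F y by apply: HM'; rewrite /L' pb /p Eya Eyb Lyb orbT.
  by rewrite Hy ltnNge ltnW.
exists (fun a b => F a < F b); split=> //; exists ds; split=> //.
exists (F a); rewrite Hsz2 -Fb FbK; split=> //; split.
  by rewrite (Hc2 _ _ _ (HK a (in_setT a))) eqxx.
by rewrite (Hc2 _ _ _ FbK) eqxx.
Qed.
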